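(* (i) Every instance of the Balancing with Friendship game with $m$ machines is $\left(2-\frac1m,0\right)$-semi-smooth. Consequently its price of total anarchy is at most $2-\frac1m$. (ii) The bound is tight. For every $m\ge1$, take $n=m^2$ and let $G$ consist of $m$ vertex-disjoint cliques of size $m$. Let $\vec s$ be the state in which the $m$ members of each clique are placed on $m$ distinct machines, so that each machine receives exactly one member of each clique. Then $\vec s$ is a pure Nash equilibrium with $c(\vec s)=\left(2-\frac1m\right)c(\vec s^* )$.
   Context: An instance of the Balancing with Friendship (BwF) game consists of: - players $N=\{1,\dots,n\}$; - machines $M=\{1,\dots,m\}$; - a simple undirected graph $G=(N,E)$ (the friendship graph). A state is $\vec s\in M^n$. Let $X_k(\vec s)=\{i:s_i=k\}$ and $x_k(\vec s)=|X_k(\vec s)|$. The cost of player $i$ with $s_i=k$ is $x_k(\vec s)$ plus the number of neighbours of $i$ in $G$ not on machine $k$. The social cost is $c(\vec s)=\sum_ic_i(\vec s)$, and $\vec s^*$ minimizes $c$. A cost-minimization game is $(\lambda,\mu)$-semi-smooth if there exist probability distributions $\sigma_i$ over each player's strategies such that for every state $\vec s$, $$\sum_i\mathbf E_{s_i'\sim\sigma_i}[c_i(s_i',\vec s_{-i})]\le\lambda c(\vec s^* )+\mu c(\vec s).$$ A coarse correlated equilibrium (CCE) is a distribution $\sigma$ over states such that for every player $i$ and machine $s_i'$, $$\mathbf E_{\vec s\sim\sigma}[c_i(\vec s)]\le\mathbf E_{\vec s\sim\sigma}[c_i(s_i',\vec s_{-i})].$$ The price of total anarchy is $\sup_\sigma\mathbf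 E_{\vec s\sim\sigma}[c(\vec s)]/c(\vec s^* )$ over all CCE $\sigma$. *)

(* Defs.v *)
From HB Require Import structures.
From mathcomp Require Import all_boot all_order all_algebra.
Set Implicit Arguments. Unset Strict Implicit. Unset Printing Implicit Defensive.
Import Order.TTheory GRing.Theory Num.Theory.

(* Players 'I_n, machines 'I_m, friendship graph G : rel 'I_n
   (required symmetric and irreflexive where relevant). *)
Definition state (n m : nat) := {ffun 'I_n -> 'I_m}.

Definition load n m (s : state n m) (k : 'I_m) : nat := #|[set j | s j == k]|.

Definition cost n m (G : rel 'I_n) (s : state n m) (i : 'I_n) : nat :=
  load s (s i) + #|[set j | G i j & s j != s i]|.

Definition social_cost n m (G : rel 'I_n) (s : state n m) : nat :=
  \sum_(i < n) cost G s i.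

Definition deviate n m (s : state n m) (i : 'I_n) (k : 'I_m) : state n m :=
  [ffun j => if j == i then k else s j].

Definition is_opt n m (G : rel 'I_n) (sopt : state n m) : Prop :=
  forall s : state n m, (social_cost G sopt <= social_cost G s)%N.

Local Open Scope ring_scope.

Definition semi_smooth n m (G : rel 'I_n) (sopt : state n m) (lam mu : rat) : Prop :=
  exists sigma : 'I_n -> 'I_m -> rat,
    (forall i k, 0 <= sigma i k) /\ (forall i, \sum_(k < m) sigma i k = 1) /\
    forall s : state n m,
      \sum_(i < n) \sum_(k < m) sigma i k * (cost G (deviate s i k) i)%:R
        <= lam * (social_cost G sopt)%:R + mu * (social_cost G s)%:R.

Definition state_distr n m (sigma : state n m -> rat) : Prop :=
  (forall s, 0 <= sigma s) /\ \sum_(s : state n m) sigma s = 1.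

Definition is_CCE n m (G : rel 'I_n) (sigma : state n m -> rat) : Prop :=
  state_distr sigma /\
  forall (i : 'I_n) (k : 'I_m),
    \sum_(s : state n m) sigma s * (cost G s i)%:R
      <= \sum_(s : state n m) sigma s * (cost G (deviate s i k) i)%:R.

Definition PoTA_le n m (G : rel 'I_n) (sopt : state n m) (lam : rat) : Prop :=
  forall sigma : state n m -> rat, is_CCE G sigma ->
    \sum_(s : state n m) sigma s * (social_cost G s)%:R
      <= lam * (social_cost G sopt)%:R.

Definition pure_NE n m (G : rel 'I_n) (s : state n m) : Prop :=
  forall (i : 'I_n) (k : 'I_m), (cost G s i <= cost G (deviate s i k) i)%N.

Local Close Scope ring_scope.

(* m vertex-disjoint cliques of size m on players 'I_(m*m):
   player p belongs to clique p %/ m. *)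
Definition cliques (m : nat) : rel 'I_(m * m) :=
  fun p q => (p != q) && (p %/ m == q %/ m).

(* each clique's members are on distinct machines (hence, there being m
   members and m machines, each machine gets exactly one member per clique) *)
Definition clique_spread (m : nat) (s : state (m * m) m) : Prop :=
  forall p q : 'I_(m * m), p %/ m = q %/ m -> s p = s q -> p = q.

Arguments cliques : clear implicits.

(* Main.v *)
Require Import Defs.
From HB Require Import structures.
From mathcomp Require Import all_boot all_order all_algebra.
From mathcomp Require Import zify ring lra.
Import Order.TTheory GRing.Theory Num.Theory.
Set Implicit Arguments. Unset Strict Implicit.
Section S1.
Local Open Scope ring_scope.

Lemma card_setE (T : finType) (P : pred T) :
  #|[set x | P x]| = \sum_x (P x : nat).
Proof.
rewrite -sum1_card big_mkcond /=; apply: eq_bigr => x _.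
by rewrite inE; case: (P x).
Qed.

Lemma sum_ind (T : finType) (a : T) : (\sum_x ((x == a) : nat) = 1)%N.
Proof.
rewrite (bigD1 a) //= eqxx big1 // => x /negPf ->; by [].
Qed.

Lemma sum_fibers (T : finType) m (f : T -> 'I_m) :
  (\sum_k #|[set x | f x == k]| = #|T|)%N.
Proof.
under eq_bigr do rewrite card_setE.
rewrite exchange_big /=.
transitivity (\sum_(x : T) 1%N); last by rewrite sum1_card.
apply: eq_bigr => x _; rewrite -(@sum_ind _ (f x)); apply: eq_bigr => k _.
by rewrite eq_sym.
Qed.

Lemma cs (m : nat) (x : 'I_m -> nat) :
  ((\sum_k x k) ^ 2 <= m * \sum_k (x k)^2)%N.
Proof.
rewrite -(ler_nat rat) natrX natrM !natr_sum.
set y := fun k => (x k)%:R : rat.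
have H : (0 : rat) <= \sum_k \sum_l (y k - y l)^+2.
  by apply: sumr_ge0 => k _; apply: sumr_ge0 => l _; exact: sqr_ge0.
have E : \sum_k \sum_l (y k - y l)^+2 =
   (m%:R * \sum_k (y k)^+2) *+ 2 - ((\sum_k y k)^+2) *+ 2.
  under eq_bigr do under eq_bigr do rewrite sqrrB.
  set Q := \sum_k y k ^+ 2; set S := \sum_k y k.
  have HI : forall k, \sum_l (y k ^+ 2 - y k * y l *+ 2 + y l ^+ 2) =
     m%:R * y k ^+ 2 - y k * S *+ 2 + Q.
    move=> k; rewrite big_split /= sumrB sumr_const card_ord sumrMnl -mulr_sumr.
    rewrite -mulr_natl /S /Q; ring.
  under eq_bigr do rewrite HI.
  rewrite big_split /= sumrB sumr_const card_ord sumrMnl -mulr_sumr -mulr_suml.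
  rewrite -mulr_natl -/Q -/S. clearbody Q S. ring.
have : (0:rat) <= (m%:R * \sum_k (y k)^+2) - ((\sum_k y k)^+2).
  by move: H; rewrite E -mulrnBl pmulrn_lge0.
rewrite subr_ge0 /y => H2.
under [X in _ <= _ * X]eq_bigr do rewrite natrX.
exact: H2.
Qed.

End S1.

Definition deg n (G : rel 'I_n) i := #|[set j | G i j]|.

Lemma cost_expand n m (G : rel 'I_n) (s : state n m) i :
  cost G s i = \sum_j ((s j == s i) + (G i j && (s j != s i)))%N.
Proof. by rewrite /cost /load !card_setE big_split. Qed.

Lemma dev_cost n m (G : rel 'I_n) (s : state n m) i k : irreflexive G ->
  cost G (deviate s i k) i =
  \sum_j ((if j == i then 1 else (s j == k : nat)) + (G i j && (s j != k)))%N.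
Proof.
move=> irr; rewrite cost_expand; apply: eq_bigr => j _.
rewrite /deviate !ffunE eqxx.
case: (eqVneq j i) => [->|_]; first by rewrite irr eqxx.
by [].
Qed.

Lemma dev_sum n m (G : rel 'I_n) (s : state n m) i : (0 < m)%N -> irreflexive G ->
  (\sum_k cost G (deviate s i k) i + 1 = m + n + deg G i * (m - 1))%N.
Proof.
move=> m0 irr; under eq_bigr do rewrite dev_cost //.
rewrite exchange_big /=; under eq_bigr do rewrite big_split /=.
rewrite big_split /=.
have A : (\sum_j \sum_k (if j == i then 1 else (s j == k : nat)) + 1 = m + n)%N.
  rewrite (bigD1 i) //= eqxx sum_nat_const card_ord muln1.
  rewrite (eq_bigr (fun _ => 1%N)); last first.
    move=> j /negPf ->; rewrite -(@sum_ind _ (s j)); apply: eq_bigr => k _.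
    by rewrite eq_sym.
  rewrite sum1_card -addnA; congr (_ + _).
  rewrite cardC1 card_ord; move: (ltn_ord i); lia.
have B : (\sum_j \sum_k (G i j && (s j != k) : nat) = deg G i * (m - 1))%N.
  rewrite /deg card_setE big_distrl /=; apply: eq_bigr => j _.
  case: (G i j) => /=; last by rewrite big1.
  rewrite mul1n.
  have := @sum_ind _ (s j).
  have : (\sum_k ((s j != k : nat) + (k == s j : nat)) = m)%N.
    rewrite (eq_bigr (fun=> 1%N)); first by rewrite sum_nat_const card_ord muln1.
    by move=> k _; rewrite eq_sym; case: (k == s j).
  rewrite big_split /= => H1 H2; lia.
by rewrite addnAC A B.
Qed.

Lemma cost_lb n m (G : rel 'I_n) (s : state n m) i : irreflexive G ->
  (1 + deg G i <= cost G s i)%N.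
Proof.
move=> irr; rewrite cost_expand /deg card_setE -(@sum_ind _ i) -big_split /=.
apply: leq_sum => j _.
case: (eqVneq j i) => [->|nji]; first by rewrite irr eqxx.
by case: (G i j); case: (s j == s i).
Qed.

Lemma sum_load n m (s : state n m) : (\sum_k load s k = n)%N.
Proof. by rewrite /load sum_fibers card_ord. Qed.

Lemma sum_load_sq n m (s : state n m) :
  (\sum_i load s (s i) = \sum_k load s k ^ 2)%N.
Proof.
rewrite (partition_big s predT) //=; apply: eq_bigr => k _.
rewrite (eq_bigr (fun _ => load s k)); last by move=> i /eqP ->.
rewrite sum_nat_const.
rewrite -(_ : load s k = #|[pred i | s i == k]|) ?mulnn //.
by rewrite /load; apply: eq_card => j; rewrite !inE.
Qed.

Lemma cost_load n m (G : rel 'I_n) (s : state n m) i : (load s (s i) <= cost G s i)%N.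
Proof. exact: leq_addr. Qed.

Lemma sc_sq n m (G : rel 'I_n) (s : state n m) : (n ^ 2 <= m * social_cost G s)%N.
Proof.
apply: (@leq_trans (m * \sum_i load s (s i))).
  rewrite sum_load_sq -{1}(sum_load s); exact: cs.
rewrite leq_mul2l; apply/orP; right; apply: leq_sum => i _; exact: cost_load.
Qed.

Lemma sc_lb n m (G : rel 'I_n) (s : state n m) : irreflexive G ->
  (n + \sum_i deg G i <= social_cost G s)%N.
Proof.
move=> irr; rewrite -{1}(card_ord n) -sum1_card -big_split /=.
by apply: leq_sum => i _; apply: cost_lb.
Qed.

Section S3.
Local Open Scope ring_scope.

Lemma arith (N M D C im : rat) : 0 <= im -> im <= 1 -> im * M = 1 ->
  N + D <= C -> N ^+ 2 <= M * C -> 0 <= N -> 0 <= D ->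
  im * (N * (M + N) + D * (M - 1) - N) <= (2 - im) * C.
Proof.
move=> i0 i1 iM H1 H2 N0 D0.
have h1 : im * N ^+ 2 <= im * (M * C) by rewrite ler_wpM2l.
have h2 : (1 - im) * (N + D) <= (1 - im) * C by rewrite ler_wpM2l // subr_ge0.
have e1 : im * M * N = N by rewrite iM mul1r.
have e2 : im * M * D = D by rewrite iM mul1r.
have e3 : im * M * C = C by rewrite iM mul1r.
nra.
Qed.

Lemma smooth_bound n m (G : rel 'I_n) (sopt s : state n m) : (0 < m)%N ->
  irreflexive G -> is_opt G sopt ->
  \sum_(i < n) \sum_(k < m) 1 / m%:R * (cost G (deviate s i k) i)%:R
     <= (2 - 1 / m%:R) * (social_cost G sopt)%:R :> rat.
Proof.
move=> m0 irr opt.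
have mR : (m%:R : rat) != 0 by rewrite pnatr_eq0 -lt0n.
under eq_bigr do rewrite -mulr_sumr -natr_sum.
rewrite -mulr_sumr.
have E : forall i, ((\sum_k cost G (deviate s i k) i)%:R : rat) =
   m%:R + n%:R + (deg G i)%:R * (m%:R - 1) - 1.
  move=> i; have := dev_sum s i m0 irr.
  move/(congr1 (fun x => x%:R : rat)); rewrite /= !natrD natrM natrB // => <-.
  by rewrite addrK.
under eq_bigr do rewrite E.
have S : \sum_(i < n) ((m%:R : rat) + n%:R + (deg G i)%:R * (m%:R - 1) - 1) =
    n%:R * (m%:R + n%:R) + (\sum_i deg G i)%:R * (m%:R - 1) - n%:R.
  rewrite sumrB big_split /= !sumr_const card_ord natr_sum -mulr_suml.
  by rewrite -mulr_natl mulr1 mulr_natl.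
rewrite S; apply: arith.
- by rewrite divr_ge0 // ler0n.
- by rewrite ler_pdivrMr ?ltr0n // mul1r ler1n.
- by rewrite mul1r mulVf.
- by rewrite -natrD ler_nat; apply: sc_lb.
- by rewrite -natrX -natrM ler_nat; apply: sc_sq.
- exact: ler0n.
- exact: ler0n.
Qed.

Lemma pota n m (G : rel 'I_n) (sopt : state n m) : (0 < m)%N ->
  irreflexive G -> is_opt G sopt -> PoTA_le G sopt (2 - 1 / m%:R).
Proof.
move=> m0 irr opt sigma [[s0 s1] cce].
have mR : (m%:R : rat) != 0 by rewrite pnatr_eq0 -lt0n.
set L := (2 - 1 / m%:R) * _.
have step : forall i, \sum_s sigma s * (cost G s i)%:R <=
   \sum_s sigma s * \sum_k 1 / m%:R * (cost G (deviate s i k) i)%:R.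
  move=> i.
  have -> : \sum_s sigma s * (cost G s i)%:R =
            \sum_(k < m) 1 / m%:R * \sum_s sigma s * (cost G s i)%:R.
    by rewrite sumr_const card_ord -mulr_natl; field.
  apply: (@le_trans _ _ (\sum_(k < m) 1 / m%:R *
                   \sum_s sigma s * (cost G (deviate s i k) i)%:R)).
    apply: ler_sum => k _; apply: ler_wpM2l; last exact: cce.
    by rewrite divr_ge0 // ler0n.
  rewrite le_eqVlt; apply/orP; left; apply/eqP.
  under eq_bigr do rewrite mulr_sumr.
  rewrite exchange_big /=; apply: eq_bigr => s _.
  rewrite mulr_sumr; apply: eq_bigr => k _; ring.
apply: (@le_trans _ _ (\sum_s sigma s * L)); last first.
  by rewrite -mulr_suml s1 mul1r.
apply: (@le_trans _ _ (\sum_s sigma s *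
   \sum_(i < n) \sum_k 1 / m%:R * (cost G (deviate s i k) i)%:R)); last first.
  apply: ler_sum => s _; apply: ler_wpM2l => //; exact: smooth_bound.
have -> : \sum_s sigma s * (social_cost G s)%:R =
          \sum_(i < n) \sum_s sigma s * (cost G s i)%:R.
  rewrite exchange_big /=; apply: eq_bigr => s _.
  by rewrite /social_cost natr_sum mulr_sumr.
apply: (@le_trans _ _ (\sum_(i < n) \sum_s sigma s *
   \sum_k 1 / m%:R * (cost G (deviate s i k) i)%:R)).
  by apply: ler_sum => i _; exact: step.
rewrite exchange_big /=; apply: ler_sum => s _.
by rewrite mulr_sumr.
Qed.

End S3.

Lemma full_fibers (T : finType) m (f g : T -> 'I_m) : #|T| = (m * m)%N ->
  (forall x y, f x = f y -> g x = g y -> x = y) ->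
  forall k, #|[set x | f x == k]| = m.
Proof.
move=> cT inj.
have le : forall k, (#|[set x | f x == k]| <= m)%N.
  move=> k; rewrite -(card_in_imset (f := g)); last first.
    move=> x y; rewrite !inE => /eqP fx /eqP fy; apply: inj; by rewrite fx fy.
  by rewrite -[X in (_ <= X)%N](card_ord m) max_card.
have S := @sum_fibers _ _ f; rewrite cT in S.
have S2 : (\sum_k (m - #|[set x | f x == k]|) = 0)%N.
  have : (\sum_k (#|[set x | f x == k]| + (m - #|[set x | f x == k]|)) = m * m)%N.
    under eq_bigr do rewrite subnKC ?le //.
    by rewrite sum_nat_const card_ord.
  rewrite big_split /= S; lia.
move/eqP: S2; rewrite sum_nat_eq0 => /forallP H k.
have := H k; have := le k; rewrite /= subn_eq0; lia.
Qed.

Section Cl.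
Variable M : nat.
Local Notation m := M.+1.
Definition clq (p : 'I_(m * m)) : 'I_m := inord (p %/ m).
Definition rmd (p : 'I_(m * m)) : 'I_m := inord (p %% m).

Lemma clqE p : val (clq p) = (p %/ m)%N.
Proof. by rewrite /clq /= inordK // ltn_divLR // ltn_ord. Qed.

Lemma rmdE p : val (rmd p) = (p %% m)%N.
Proof. by rewrite /rmd /= inordK // ltn_mod. Qed.

Lemma clq_eq p q : (clq p == clq q) = (p %/ m == q %/ m)%N.
Proof. by rewrite -val_eqE /= !clqE. Qed.

Lemma clique_size c : #|[set x | clq x == c]| = m.
Proof.
apply: (full_fibers (g := rmd)); first by rewrite card_ord.
move=> x y /eqP; rewrite clq_eq => /eqP ex /(congr1 val); rewrite !rmdE => ey.
by apply: val_inj; rewrite /= (divn_eq x m) (divn_eq y m) ex ey.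
Qed.

Lemma deg_cl i : deg (cliques m) i = M.
Proof.
have := clique_size (clq i); rewrite (cardsD1 i) inE eqxx /= => H.
suff -> : deg (cliques m) i = #|[set x | clq x == clq i] :\ i| by move: H; rewrite add1n => -[].
rewrite /deg; apply: eq_card => j.
by rewrite !inE clq_eq /cliques eq_sym [i %/ m == _]eq_sym.
Qed.

Lemma load_spread (s : state (m * m) m) : clique_spread s -> forall k, load s k = m.
Proof.
move=> sp k; apply: (full_fibers (g := clq)); first by rewrite card_ord.
move=> x y sxy /eqP; rewrite clq_eq => /eqP cxy; exact: sp.
Qed.
End Cl.

Section Cl2.
Variable M : nat.
Local Notation m := M.+1.
Local Notation G := (cliques m).

Lemma irr_cl : irreflexive G.
Proof. by move=> i; rewrite /cliques eqxx. Qed.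

Lemma cost_spread (s : state (m * m) m) i : clique_spread s -> cost G s i = (m + M)%N.
Proof.
move=> sp; rewrite /cost load_spread //; congr (_ + _); rewrite -[RHS](deg_cl i) /deg.
apply: eq_card => j; rewrite !inE.
case Gij: (G i j) => //=.
apply/negP => /eqP e; move: Gij; rewrite /cliques => /andP [nij /eqP cij].
by move: nij; rewrite (sp j i (esym cij) e) eqxx.
Qed.

Lemma ne_spread (s : state (m * m) m) : clique_spread s -> pure_NE G s.
Proof.
move=> sp i k; rewrite cost_spread //.
case: (eqVneq k (s i)) => [->|nk].
  have -> : deviate s i (s i) = s by apply/ffunP => j; rewrite ffunE; case: eqP => // ->.
  by rewrite cost_spread.
rewrite dev_cost; last exact: irr_cl. rewrite big_split /=.
have A : (\sum_j (if j == i then 1 else (s j == k : nat)) = 1 + m)%N.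
  rewrite -[X in _ = (1 + X)%N](load_spread sp k) /load card_setE -[in RHS](@sum_ind _ i) -big_split /=.
  apply: eq_bigr => j _; case: (eqVneq j i) => [->|//].
  by rewrite eq_sym (negPf nk).
have B : (M <= \sum_j (G i j && (s j != k) : nat) + 1)%N.
  have le1 : (#|[set j | G i j && (s j == k)]| <= 1)%N.
    apply/card_le1_eqP => x y; rewrite !inE => /andP [gx /eqP sx] /andP [gy /eqP sy].
    move: gx gy; rewrite /cliques => /andP [_ /eqP cx] /andP [_ /eqP cy].
    by apply: sp; rewrite -?cx -?cy // sx sy.
  rewrite -[X in (X <= _)%N](deg_cl i) /deg card_setE.
  apply: (leq_trans _ (leq_add (leqnn _) le1)); rewrite card_setE -big_split /=.
  by apply: leq_sum => j _; case: (G i j); case: (s j == k).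
by rewrite A [(1 + m)%N]addnC -addnA leq_add2l addnC.
Qed.

Definition s0 : state (m * m) m := [ffun p => clq p].

Lemma cost_s0 i : cost G s0 i = m.
Proof.
rewrite /cost /load ffunE.
rewrite (eq_card (B := [set x | clq x == clq i])); last by move=> j; rewrite !inE ffunE.
rewrite clique_size; apply/eqP; rewrite -[X in _ == X]addn0 eqn_add2l cards_eq0.
apply/eqP/setP => j; rewrite !inE !ffunE /cliques clq_eq.
by rewrite [(j %/ m == _)%N]eq_sym; case: (i %/ m == j %/ m)%N; rewrite ?andbF.
Qed.
End Cl2.

Local Open Scope ring_scope.

Theorem theorem10 :
  (forall (n m : nat) (G : rel 'I_n), (0 < m)%N -> symmetric G -> irreflexive G ->
     forall sopt : state n m, is_opt G sopt ->
       semi_smooth G sopt (2 - 1 / m%:R) 0 /\ PoTA_le G sopt (2 - 1 / m%:R))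
  /\
  (forall m : nat, (0 < m)%N ->
     forall s : state (m * m)%N m, clique_spread s ->
       pure_NE (cliques m) s /\
       forall sopt : state (m * m)%N m, is_opt (cliques m) sopt ->
         ((social_cost (cliques m) s)%:R : rat)
           = (2 - 1 / m%:R) * (social_cost (cliques m) sopt)%:R).
Proof.
split.
  move=> n m G m0 _ irr sopt opt; split; last exact: pota.
  have mR : (m%:R : rat) != 0 by rewrite pnatr_eq0 -lt0n.
  exists (fun _ _ => 1 / m%:R); split; first by move=> *; rewrite divr_ge0 // ler0n.
  split; first by move=> i; rewrite sumr_const card_ord -mulr_natl; field.
  by move=> s; rewrite mul0r addr0; exact: smooth_bound.
case=> [//|M] _ s sp; split; first exact: ne_spread.
move=> sopt opt.
have Cs : social_cost (cliques M.+1) s = (M.+1 * M.+1 * (M.+1 + M))%N.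
  rewrite /social_cost (eq_bigr (fun _ => (M.+1 + M)%N)); last by move=> i _; rewrite cost_spread.
  by rewrite sum_nat_const card_ord.
have C0 : social_cost (cliques M.+1) (s0 M) = (M.+1 * M.+1 * M.+1)%N.
  rewrite /social_cost (eq_bigr (fun _ => M.+1)); last by move=> i _; rewrite cost_s0.
  by rewrite sum_nat_const card_ord.
have le1 := opt (s0 M); rewrite C0 in le1.
have ge1 := sc_sq (cliques M.+1) sopt.
have Co : social_cost (cliques M.+1) sopt = (M.+1 * M.+1 * M.+1)%N.
  apply/eqP; rewrite eqn_leq le1 /=.
  rewrite -(leq_pmul2l (ltn0Sn M)); apply: leq_trans ge1; rewrite leq_eqVlt; apply/orP; left.
  by apply/eqP; rewrite expnS expn1 !mulnA.
rewrite Cs Co -addn1 !natrM !natrD.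
have h : (M%:R + 1 : rat) != 0 by rewrite -[1]/(1%:R) -natrD pnatr_eq0 addn1.
field. exact h.

Qed.
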